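(* Let $T$ be a tree of order $n$, and let $d_i$ denote the number of dominating sets of $T$ of size $i$. Then $$d_{\gamma(T)}\le d_{\gamma(T)+1}\le\cdots\le d_{\left\lfloor\frac{n+2\gamma(T)+1}{3}\right\rfloor}.$$
   Context: A dominating set of a graph $G=(V,E)$ is a set $S\subseteq V$ such that every vertex is in $S$ or adjacent to a vertex of $S$. $\gamma(T)$ is the minimum size of a dominating set of $T$. *)

(* Defs.v *)
From mathcomp Require Import all_boot.
Set Implicit Arguments. Unset Strict Implicit. Unset Printing Implicit Defensive.

Definition simple_graph (T : finType) (e : rel T) : Prop :=
  symmetric e /\ irreflexive e.

Definition num_edges (T : finType) (e : rel T) : nat :=
  #|[set p : T * T | e p.1 p.2]| %/ 2.

Definition is_tree (T : finType) (e : rel T) : Prop :=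
  simple_graph e /\ 0 < #|T| /\ (forall x y : T, connect e x y) /\
  num_edges e = #|T| - 1.

Definition dominating (T : finType) (e : rel T) (S : {set T}) : bool :=
  [forall v, (v \in S) || [exists u in S, e v u]].

Lemma dominating_setT (T : finType) (e : rel T) : dominating e [set: T].
Proof. by apply/forallP => v; rewrite in_setT. Qed.

Lemma exists_dom_size (T : finType) (e : rel T) :
  exists n, [exists S : {set T}, dominating e S && (#|S| == n)].
Proof. exists #|[set: T]|; apply/existsP; exists [set: T].
  by rewrite dominating_setT eqxx. Qed.

Definition domination_number (T : finType) (e : rel T) : nat :=
  ex_minn (exists_dom_size e).

Definition num_dom_sets (T : finType) (e : rel T) (i : nat) : nat :=
  #|[set S : {set T} | dominating e S && (#|S| == i)]|.

(* Main.v *)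
Require Import Defs.
From mathcomp Require Import all_boot zify.
Set Implicit Arguments. Unset Strict Implicit. Unset Printing Implicit Defensive.

Section Tree.
Variables (T : finType) (e : rel T) (r : T).
Hypothesis esym : symmetric e.
Hypothesis eirr : irreflexive e.
Hypothesis econn : forall x y, connect e x y.

Fixpoint ball k := if k is k'.+1 then ball k' :|: [set y | [exists x in ball k', e x y]] else [set r].

Lemma ball_sub k : ball k \subset ball k.+1.
Proof. by rewrite /= subsetUl. Qed.
Lemma ball_mono k m : k <= m -> ball k \subset ball m.
Proof.
move=> /subnK <-; elim: (m - k) => [|j IH]; first by rewrite add0n.
rewrite addSn; exact: subset_trans IH (ball_sub _).
Qed.
Lemma ball_edge k x y : x \in ball k -> e x y -> y \in ball k.+1.
Proof.
move=> xk exy; rewrite /= inE; apply/orP; right; rewrite inE.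
by apply/existsP; exists x; rewrite xk.
Qed.
Lemma ball_path p x k : x \in ball k -> path e x p -> last x p \in ball (k + size p).
Proof.
elim: p x k => [|y p IH] x k /=; first by rewrite addn0.
move=> xk /andP[exy pp]; rewrite addnS -addSn; apply: IH pp; exact: ball_edge xk exy.
Qed.
Lemma ball_ex v : exists k, v \in ball k.
Proof.
have /connectP [p pp ->] := econn r v. exists (0 + size p); apply: ball_path pp.
by rewrite /= inE.
Qed.
Definition depth v := ex_minn (ball_ex v).
Lemma depth_ball v k : (v \in ball k) = (depth v <= k).
Proof.
rewrite /depth; case: ex_minnP => m vm mmin; apply/idP/idP; first exact: mmin.
move=> mk; exact: (subsetP (ball_mono mk)).
Qed.
Lemma depth_edge x y : e x y -> depth y <= (depth x).+1.
Proof. move=> exy; rewrite -depth_ball; apply: ball_edge exy; by rewrite depth_ball. Qed.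
Lemma depth0 v : (depth v == 0) = (v == r).
Proof. by rewrite -leqn0 -depth_ball /= inE. Qed.
Lemma depth_lower v : v != r -> exists u, e v u && (depth u < depth v).
Proof.
rewrite -depth0 => dv. have : v \in ball (depth v) by rewrite depth_ball.
move: dv; case E: (depth v) => [|d] // _. rewrite /= inE => /orP[].
  by rewrite depth_ball E ltnn.
rewrite inE => /existsP [x /andP [xd exv]]. exists x.
by rewrite esym exv /= ltnS -depth_ball.
Qed.

Definition par v := if [pick u | e v u && (depth u < depth v)] is Some u then u else v.
Lemma par_spec v : v != r -> e v (par v) /\ depth (par v) < depth v.
Proof.
move=> vr; rewrite /par; case: pickP => [u /andP[a b]|H]; first by split.
have [u /andP [a b]] := depth_lower vr. by move: (H u); rewrite a b.
Qed.
Lemma par_depth v : v != r -> depth v = (depth (par v)).+1.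
Proof.
move=> vr; have [a b] := par_spec vr; have := depth_edge (a : e v (par v)).
rewrite esym in a; have := depth_edge a. lia.
Qed.
Lemma par_r : par r = r.
Proof.
rewrite /par; case: pickP => [u /andP [_]|//].
by have := depth0 r; rewrite eqxx => /eqP ->.
Qed.

Hypothesis hedges : num_edges e = #|T| - 1.

Lemma edge_par a b : e a b -> (b == par a) || (a == par b).
Proof.
move=> eab; case: (boolP ((b == par a) || (a == par b))) => // H; exfalso.
move: H; rewrite negb_or => /andP [H1 H2].
pose f1 := fun v => (v, par v). pose f2 := fun v => (par v, v).
have inj1 : injective f1 by move=> x y; rewrite /f1; case=> ->.
have inj2 : injective f2 by move=> x y; rewrite /f2; case=> _ ->.
pose Q1 := f1 @: [set~ r]. pose Q2 := f2 @: [set~ r].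
pose X := [set (a, b); (b, a)].
have n0 : 0 < #|T| by apply/card_gt0P; exists r.
have c1 : #|Q1| = #|T|.-1 by rewrite card_imset // cardsC1.
have c2 : #|Q2| = #|T|.-1 by rewrite card_imset // cardsC1.
have ab : a != b by apply/eqP=> E; move: eab; rewrite E eirr.
have cX : #|X| = 2 by rewrite cards2; case: eqP => // -[E _]; move: ab; rewrite E eqxx.
have d12 : Q1 :&: Q2 = set0.
  apply/setP => -[x y]; rewrite !inE; apply/negP => /andP [/imsetP [v vr [-> ->]] /imsetP [w wr [E1 E2]]].
  move: vr wr; rewrite !inE => vr wr.
  have [_ d1] := par_spec vr; have [_ d2] := par_spec wr.
  move: d1 d2; rewrite E2 E1 -E2; lia.
have dX : (Q1 :|: Q2) :&: X = set0.
  apply/setP => -[x y]; rewrite !inE; apply/negP => /andP [/orP [] /imsetP [v vr [E1 E2]] /orP [] /eqP [E3 E4]];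
  move: E1 E2; rewrite E3 E4 => E1 E2; subst.
  - by rewrite eqxx in H1.
  - by rewrite eqxx in H2.
  - by rewrite eqxx in H2.
  - by rewrite eqxx in H1.
have cU : #|Q1 :|: Q2 :|: X| = 2 * #|T|.
  rewrite cardsU dX cards0 cardsU d12 cards0 c1 c2 cX. lia.
have sub : Q1 :|: Q2 :|: X \subset [set p : T * T | e p.1 p.2].
  apply/subsetP => -[x y]; rewrite !inE => /orP [/orP []|] .
  - case/imsetP => v; rewrite !inE => vr [-> ->]; by case: (par_spec vr).
  - case/imsetP => v; rewrite !inE => vr [-> ->]; case: (par_spec vr) => ? _; by rewrite esym.
  - by case/orP => /eqP [-> ->] //=; rewrite esym.
have := subset_leq_card sub; rewrite cU.
move: hedges; rewrite /num_edges. lia.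
Qed.

Lemma child v s : e v s -> s != par v -> par s = v /\ s != r.
Proof.
move=> evs sv; have := edge_par evs; rewrite (negbTE sv) /= => /eqP E.
split; first by rewrite E.
by apply/eqP => sr; move: evs; rewrite E sr par_r eirr.
Qed.


Lemma domP (S : {set T}) : reflect (forall v, v \in S \/ exists2 u, u \in S & e v u) (dominating e S).
Proof.
apply: (iffP forallP) => H v.
  case/orP: (H v) => [|/existsP [u /andP [us evu]]]; [by left | by right; exists u].
case: (H v) => [->//|[u us evu]]; apply/orP; right; apply/existsP; exists u; by rewrite us.
Qed.

Definition rem (S : {set T}) := [set v in S | dominating e (S :\ v)].
Definition pick_child (R : {set T}) u := [pick x | (x \in R) && (par x == u) && (x != r)].
Definition bb (S : {set T}) w := (w \in rem S) &&
  (if (par w \notin S) && ((par (par w) \notin rem S) || (par w == r))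
   then pick_child (rem S) (par w) == Some w else true).
Fixpoint colf (S : {set T}) k v := if k is k'.+1 then bb S v (+) colf S k' (par v) else false.
Definition color (S : {set T}) v := colf S (depth v) v.
Lemma colorE S v : v != r -> color S v = bb S v (+) color S (par v).
Proof. move=> vr; by rewrite {1}/color (par_depth vr). Qed.

Lemma remS S v : v \in rem S -> v \in S.
Proof. by rewrite inE => /andP[]. Qed.

Lemma rem_nbr S v : v \in rem S -> exists2 s, s \in S & e v s.
Proof.
rewrite inE => /andP [vS /domP /(_ v)] [|[s]]; rewrite ?in_setD1 ?eqxx //.
by case/andP => _ sS evs; exists s.
Qed.

Lemma rem_other S v u : v \in rem S -> u \notin S -> exists2 s, s \in S :\ v & e u s.
Proof.
rewrite inE => /andP [vS /domP /(_ u)] [|[s]]; rewrite ?in_setD1.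
  by case/andP => _ uS' /negP.
by move=> sS eus; exists s => //; rewrite in_setD1.
Qed.

Lemma lemA S v : v \in rem S -> (forall y, e v y -> y \in S -> y \in rem S) ->
  exists w, [/\ e v w, w \in rem S & color S w != color S v].
Proof.
move=> vR noN. have [s sS evs] := rem_nbr vR. have sR := noN s evs sS.
case: (boolP ((v != r) && (par v \in rem S))) => [/andP [vr pR]|H].
  exists (par v); have [ep _] := par_spec vr; split => //.
  rewrite (colorE S vr); have -> : bb S v = true by rewrite /bb vR /= (remS pR).
  by case: color.
have sp : s != par v.
  apply/eqP => E; move: H; rewrite -E sR andbT negbK => /eqP vr.
  by move: evs; rewrite E vr par_r eirr.
have [ps sr] := child evs sp; exists s; split => //.
rewrite (colorE S sr) ps; have -> : bb S s = true by rewrite /bb sR /= ps (remS vR).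
by case: color.
Qed.

Lemma lemB S u : dominating e S -> u \notin S -> (forall y, e u y -> y \in S -> y \in rem S) ->
  exists w1 w2, [/\ e u w1, e u w2, w1 \in rem S, w2 \in rem S & color S w1 != color S w2].
Proof.
move=> dS uS noN.
have [w1 w1S ew1] : exists2 w, w \in S & e u w.
  by case: (domP _ dS u) => [uS'|//]; rewrite uS' in uS.
have w1R := noN _ ew1 w1S.
have [w2 w2S ew2] := rem_other w1R uS; move: w2S; rewrite in_setD1 => /andP [w21 w2S].
have w2R := noN _ ew2 w2S.
have uR : (u \in rem S) = false by apply/negP => /remS; rewrite (negbTE uS).
have two : forall z, exists w, [/\ e u w, w \in rem S & w != z].
  move=> z; case: (eqVneq w1 z) => E; last by exists w1.
  by exists w2; split => //; rewrite -E.
case: (boolP ((u != r) && (par u \in rem S))) => [/andP [ur pR]|H].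
  have [w [ew wR wp]] := two (par u).
  have [pw wr] := child ew wp.
  exists (par u), w; split => //; first by case: (par_spec ur).
  rewrite (colorE S wr) pw (colorE S ur).
  have -> : bb S w = true by rewrite /bb wR pw uS pR (negbTE ur).
  have -> : bb S u = false by rewrite /bb uR.
  by case: color.
have cu : (par u \notin rem S) || (u == r) by move: H; rewrite negb_and negbK orbC.
have wch : forall w, e u w -> w \in rem S -> par w = u /\ w != r.
  move=> w ew wR; refine (child ew _); apply/eqP => E.
  move: H; rewrite -E wR andbT negbK => /eqP ur.
  by move: ew; rewrite E ur par_r eirr.
have [pw1 w1r] := wch _ ew1 w1R.
case E: (pick_child (rem S) u) => [p0|]; last first.
  by move: E; rewrite /pick_child; case: pickP => // /(_ w1); rewrite /= w1R pw1 eqxx w1r.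
have : (p0 \in rem S) && (par p0 == u) && (p0 != r).
  by move: E; rewrite /pick_child; case: pickP => // x Hx [<-].
case/andP => /andP [p0R /eqP pp0] p0r.
have [w [ew wR wp0]] := two p0.
have [pw wr] := wch _ ew wR.
exists p0, w; split => //.
  by case: (par_spec p0r); rewrite pp0 esym.
rewrite (colorE S p0r) (colorE S wr) pp0 pw.
have -> : bb S p0 = true.
  by rewrite /bb p0R pp0 uS cu /= E eqxx.
have -> : bb S w = false.
  rewrite /bb wR pw uS cu /= E; apply/eqP => -[E']; by rewrite E' eqxx in wp0.
by case: color.
Qed.

Lemma lemL S : dominating e S -> 2 * domination_number e <= 2 * #|S| - #|rem S|.
Proof.
move=> dS.
pose B c := [set x in rem S | color S x != c].
pose D c := S :\: B c.
have inD c y : y \in S -> (y \notin rem S) || (color S y == c) -> y \in D c.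
  by rewrite /D !inE => -> H; rewrite andbT negb_and negbK.
have domD c : dominating e (D c).
  apply/domP => x.
  case: (boolP [exists y, e x y && (y \in S) && (y \notin rem S)]) =>
     [/existsP [y /andP [/andP [exy yS] yN]]|noN].
    by right; exists y => //; apply: inD; rewrite ?yN.
  have noN' : forall y, e x y -> y \in S -> y \in rem S.
    move=> y exy yS; apply: contraNT noN => yN; apply/existsP; exists y; by rewrite exy yS.
  case: (boolP (x \in S)) => xS.
    case: (boolP (x \in rem S)) => xR; last by left; apply: inD; rewrite ?xR.
    case: (eqVneq (color S x) c) => xc.
      by left; apply: inD; rewrite // xc eqxx orbT.
    have [w [exw wR wc]] := lemA xR noN'.
    right; exists w => //; apply: inD; first exact: remS wR.
    apply/orP; right; move: wc xc; by case: (color S w); case: (color S x); case: c.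
  have [w1 [w2 [e1 e2 R1 R2 c12]]] := lemB dS xS noN'.
  right; case: (eqVneq (color S w1) c) => c1.
    by exists w1 => //; apply: inD; [exact: remS R1| rewrite c1 eqxx orbT].
  exists w2 => //; apply: inD; first exact: remS R2.
  apply/orP; right; move: c12 c1; by case: (color S w1); case: (color S w2); case: c.
have sB c : B c \subset S.
  by apply/subsetP => x; rewrite inE => /andP [/remS].
have cD c : #|D c| = #|S| - #|B c|.
  by rewrite /D cardsD (setIidPr (sB c)).
have cB : #|B true| + #|B false| = #|rem S|.
  rewrite -(cardsID [set x | color S x] (rem S)) addnC.
  by congr (_ + _); apply: eq_card => x; rewrite !inE; case: color; rewrite ?andbT ?andbF.
have g c : domination_number e <= #|D c|.
  rewrite /domination_number; case: ex_minnP => m _ H; apply: H.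
  by apply/existsP; exists (D c); rewrite domD eqxx.
have := g true; have := g false; rewrite !cD.
have := subset_leq_card (sB true); have := subset_leq_card (sB false).
lia.
Qed.

End Tree.

Lemma dom_sub (T : finType) (e : rel T) (S S' : {set T}) :
  S \subset S' -> dominating e S -> dominating e S'.
Proof.
move=> sub /forallP H; apply/forallP => v; case/orP: (H v) => [vS|/existsP [u /andP [uS evu]]].
  by rewrite (subsetP sub v vS).
by apply/orP; right; apply/existsP; exists u; rewrite (subsetP sub u uS).
Qed.

Lemma gamma_le (T : finType) (e : rel T) (S : {set T}) :
  dominating e S -> domination_number e <= #|S|.
Proof.
move=> dS; rewrite /domination_number; case: ex_minnP => m _ H; apply: H.
by apply/existsP; exists S; rewrite dS eqxx.
Qed.

Theorem theorem3p5 (T : finType) (e : rel T) :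
  is_tree e ->
  forall i : nat,
    domination_number e <= i ->
    i < (#|T| + 2 * domination_number e + 1) %/ 3 ->
    num_dom_sets e i <= num_dom_sets e i.+1.
Proof.
move=> [[esym eirr] [n0 [conn hed]]] i gi ib.
have [r _] : exists r : T, True by case/card_gt0P: n0 => x _; exists x.
have gT : domination_number e <= #|T|.
  by rewrite -cardsT; apply: gamma_le; apply: dominating_setT.
have iT : i < #|T| by move: ib; lia.
pose A := [set S : {set T} | dominating e S && (#|S| == i)].
pose B := [set S : {set T} | dominating e S && (#|S| == i.+1)].
rewrite /num_dom_sets -/A -/B.
have cnt (X : {set {set T}}) (P : pred {set T}) : #|[set S in X | P S]| = \sum_(S in X) P S.
  rewrite -sum1_card big_mkcond /= [RHS]big_mkcond /=; apply: eq_bigr => S _.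
  by rewrite !inE; case: (S \in X); case: (P S).
have low S : S \in A -> #|T| - i <= #|[set S' in B | S \subset S']|.
  rewrite inE => /andP [dS /eqP cS].
  have <- : #|[set v |: S | v in ~: S]| = #|T| - i.
    rewrite card_in_imset; first by rewrite -cS -(cardsC S) addKn.
    move=> v w; rewrite !inE => vS wS E.
    have : v \in w |: S by rewrite -E setU11.
    by rewrite !inE (negbTE vS) orbF => /eqP.
  apply: subset_leq_card; apply/subsetP => S'; case/imsetP => v; rewrite !inE => vS ->.
  rewrite ?inE subsetUr andbT.
  apply/andP; split.
    by apply: dom_sub dS; apply: subsetUr.
  by rewrite cardsU1 vS cS.
have up S' : S' \in B -> #|[set S in A | S \subset S']| <= #|T| - i.
  rewrite inE => /andP [dS' /eqP cS'].
  have hL := @lemL T e r esym eirr conn hed S' dS'.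
  have rS : #|rem e S'| <= #|S'|.
    by apply: subset_leq_card; apply/subsetP => x; rewrite inE => /andP [].
  apply: (@leq_trans #|rem e S'|); last by move: ib; lia.
  apply: (@leq_trans #|[set S' :\ v | v in rem e S']|); last exact: leq_imset_card.
  apply: subset_leq_card; apply/subsetP => S; rewrite !inE => /andP [/andP [dS /eqP cS] sub].
  have : 0 < #|S' :\: S| by rewrite cardsD (setIidPr sub) cS cS' subSnn.
  case/card_gt0P => v; rewrite inE => /andP [vS vS'].
  have E : S = S' :\ v.
    apply/eqP; rewrite eqEcard; apply/andP; split.
      by apply/subsetP => x xS; rewrite in_setD1 (subsetP sub x xS) andbT; apply: contraNneq vS => <-.
    by have := cardsD1 v S'; rewrite vS' cS' cS; lia.
  apply/imsetP; exists v => //; rewrite inE vS' /=; by rewrite -E.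
have : #|A| * (#|T| - i) <= #|B| * (#|T| - i).
  rewrite -!sum_nat_const.
  apply: (@leq_trans (\sum_(S in A) #|[set S' in B | S \subset S']|)); first exact: leq_sum.
  apply: (@leq_trans (\sum_(S' in B) #|[set S in A | S \subset S']|)); last exact: leq_sum.
  under eq_bigr do rewrite cnt.
  under [X in _ <= X]eq_bigr do rewrite cnt.
  by rewrite exchange_big.
by rewrite leq_pmul2r ?subn_gt0.
Qed.
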